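(* Let $\mathcal A$ and $\mathcal B$ be Banach algebras and $\varphi:\mathcal A\to\mathcal B$ a continuous homomorphism with dense range. Let $I$ be a closed ideal of $\mathcal A$ and $J$ a closed ideal of $\mathcal B$ with $\varphi(I)\subseteq J$. If $\mathcal A$ has a bounded approximate identity modulo $I$, then $\mathcal B$ has a bounded approximate identity modulo $J$.
   Context: A Banach algebra $\mathcal A$ has a bounded approximate identity modulo a closed ideal $I$ if there is a bounded net $(u_\alpha)$ in $\mathcal A$ with $\lim_\alpha u_\alpha a=\lim_\alpha au_\alpha=a$ for all $a\in\mathcal A\setminus I$. *)

(* Defs.v *)
From HB Require Import structures.
From mathcomp Require Import all_boot all_order all_algebra.
From mathcomp Require Import all_classical all_reals all_analysis.
Set Implicit Arguments. Unset Strict Implicit. Unset Printing Implicit Defensive.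
Import Order.TTheory GRing.Theory Num.Theory.
Import numFieldNormedType.Exports.
Local Open Scope classical_set_scope.
Local Open Scope ring_scope.

Definition banach_mul (K : numFieldType) (A : completeNormedModType K)
    (mul : A -> A -> A) : Prop :=
  [/\ (forall x y z, mul x (mul y z) = mul (mul x y) z),
      ((forall x y z, mul (x + y) z = mul x z + mul y z) /\
      (forall x y z, mul x (y + z) = mul x y + mul x z)),
      (forall (k : K) x y, mul (k *: x) y = k *: mul x y),
      (forall (k : K) x y, mul x (k *: y) = k *: mul x y)
    & (forall x y, `|mul x y| <= `|x| * `|y|)].

Definition alg_hom (K : numFieldType) (A B : completeNormedModType K)
    (mulA : A -> A -> A) (mulB : B -> B -> B) (phi : A -> B) : Prop :=
  [/\ (forall x y, phi (x + y) = phi x + phi y),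
      (forall (k : K) x, phi (k *: x) = k *: phi x)
    & (forall x y, phi (mulA x y) = mulB (phi x) (phi y))].

Definition closed_ideal (K : numFieldType) (A : completeNormedModType K)
    (mul : A -> A -> A) (I : set A) : Prop :=
  [/\ closed I, I 0,
      (forall x y, I x -> I y -> I (x + y)),
      (forall (k : K) x, I x -> I (k *: x))
    & (forall a x, I x -> I (mul a x) /\ I (mul x a))].

Definition has_bai_mod (K : numFieldType) (A : completeNormedModType K)
    (mul : A -> A -> A) (I : set A) : Prop :=
  exists (D : Type) (le : D -> D -> Prop) (u : D -> A),
    [/\ ((forall d, le d d) /\
        (forall d1 d2 d3, le d1 d2 -> le d2 d3 -> le d1 d3)),
        (exists d : D, True),
        (forall d1 d2, exists d3, le d1 d3 /\ le d2 d3),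
        (exists M : K, forall d, `|u d| <= M)
      & (forall a, ~ I a ->
           forall e : K, 0 < e -> exists d0, forall d, le d0 d ->
             `|mul (u d) a - a| < e /\ `|mul a (u d) - a| < e)].

(* Main.v *)
Require Import Defs.
From HB Require Import structures.
From mathcomp Require Import all_boot all_order all_algebra.
From mathcomp Require Import all_classical all_reals all_analysis.
From mathcomp Require Import ring.
Import Order.TTheory GRing.Theory Num.Theory.
Import numFieldNormedType.Exports.
Local Open Scope classical_set_scope.
Local Open Scope ring_scope.

Lemma phi_bound (K : numFieldType) (A B : completeNormedModType K)
    (phi : A -> B) :
  (forall x y, phi (x + y) = phi x + phi y) ->
  (forall (k : K) x, phi (k *: x) = k *: phi x) ->
  continuous phi -> exists2 C : K, 0 < C & forall x, `|phi x| <= C * `|x|.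
Proof.
move=> hadd hsc hc.
have phi0 : phi 0 = 0.
  by have := hsc 0 0; rewrite !scale0r.
have := @cvgr_dist_lt _ _ _ (nbhs (0:A)) _ phi (phi 0) (hc 0) _ ltr01 => /(_ _).
rewrite phi0 => H0; have [/= d d0 Hd] := proj1 (nbhs_norm0P (P := fun t => `|0 - phi t| < 1)) H0.
exists (2 / d); first by rewrite divr_gt0.
move=> x; have [->|x0] := eqVneq x 0; first by rewrite phi0 !normr0 mulr0.
have nx : 0 < `|x| by rewrite normr_gt0.
set k := d / (2 * `|x|).
have k0 : 0 < k by rewrite divr_gt0 // mulr_gt0.
have : `|k *: x| < d.
  rewrite normrZ gtr0_norm //.
  have -> : k * `|x| = d / 2 by rewrite /k; field; rewrite ?gt_eqF.
  by rewrite ltr_pdivrMr // ltr_pMr // ltr1n.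
move=> /Hd; rewrite sub0r normrN hsc normrZ gtr0_norm // => H.
rewrite -(ler_pM2l k0) mulrA.
have -> : k * (2 / d) = `|x|^-1.
  by rewrite /k; field; rewrite ?gt_eqF.
by rewrite mulVf ?gt_eqF // ltW.
Qed.

Lemma arith (K : numFieldType) (t1 t2 t3 Mb eps e : K) :
  0 < e -> 0 <= Mb -> 0 <= eps -> t1 <= Mb * eps -> t2 < e / 3%:R -> t3 <= eps ->
  eps <= e / (3%:R * (Mb + 1)) -> t1 + t2 + t3 < e.
Proof.
move=> e0 Mb0 eps0 h1 h2 h3 h4.
have M1 : 0 < Mb + 1 by rewrite ltr_wpDl.
have h13 : t1 + t3 <= e / 3%:R.
  apply: (le_trans (lerD h1 h3)).
  have -> : Mb * eps + eps = (Mb + 1) * eps by rewrite mulrDl mul1r.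
  apply: (le_trans (ler_wpM2l (ltW M1) h4)).
  by rewrite le_eqVlt; apply/orP; left; apply/eqP; field; rewrite ?gt_eqF //.
rewrite addrAC; apply: (lt_le_trans (ler_ltD h13 h2)).
have -> : e / 3%:R + e / 3%:R = e - e / 3%:R by field.
by rewrite lerBlDr lerDl divr_ge0 // ltW.
Qed.

Lemma mul_oppr (K : numFieldType) (A : completeNormedModType K) (mul : A -> A -> A) :
  banach_mul mul -> (forall x y z, mul x (y - z) = mul x y - mul x z)
                 /\ (forall x y z, mul (y - z) x = mul y x - mul z x).
Proof.
move=> [_ [hl hr] zl zr _]; split => x y z.
  by rewrite hr -scaleN1r zr scaleN1r.
by rewrite hl -scaleN1r zl scaleN1r.
Qed.

Theorem corollary3p6 (K : numFieldType) (A B : completeNormedModType K)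
    (mulA : A -> A -> A) (mulB : B -> B -> B) (phi : A -> B)
    (I : set A) (J : set B) :
  banach_mul mulA -> banach_mul mulB ->
  alg_hom mulA mulB phi -> continuous phi ->
  closure (range phi) = setT ->
  closed_ideal mulA I -> closed_ideal mulB J ->
  phi @` I `<=` J ->
  has_bai_mod mulA I -> has_bai_mod mulB J.
Proof.
move=> bA bB [hadd hsc hmul] hc hdense _ [Jcl _ _ _ _] hIJ
  [D [le [u [[refl tr] ne dir [M hM] conv]]]].
have [mAr mAl] := mul_oppr _ _ _ bA.
have [mBr mBl] := mul_oppr _ _ _ bB.
have [_ _ _ _ nB] := bB.
have phiB x y : phi (x - y) = phi x - phi y.
  by rewrite hadd -scaleN1r hsc scaleN1r.
have [C C0 hb] := phi_bound _ _ _ _ hadd hsc hc.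
have M0 : 0 <= M by case: ne => d0 _; exact: le_trans (normr_ge0 _) (hM d0).
set Mb := C * M.
have Mb0 : 0 <= Mb by rewrite mulr_ge0 // ltW.
have hbu d : `|phi (u d)| <= Mb.
  apply: (le_trans (hb _)); rewrite ler_pM2l //.
exists D, le, (phi \o u); split => //.
  by exists Mb.
move=> b nb e e0.
have /nbhs_ballP [r /= r0 hr] : nbhs b (~` J).
  by apply: open_nbhs_nbhs; split => //; exact: closed_openC.
have M1 : 0 < Mb + 1 by rewrite ltr_wpDl.
have e'0 : 0 < e / (3%:R * (Mb + 1)) by rewrite divr_gt0 // mulr_gt0.
have cmp : r >=< e / (3%:R * (Mb + 1)).
  by apply: real_comparable; apply: gtr0_real.
set eps := Num.min r (e / (3%:R * (Mb + 1))).
have eps0 : 0 < eps by rewrite /eps (comparable_lt_min _ cmp) r0.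
have : closure (range phi) b by rewrite hdense.
move=> /(_ (ball b eps) (nbhsx_ballx _ _ eps0)) [_ [[a _ <-] hba]].
have hr' : ~ J (phi a).
  apply: hr; apply: le_ball hba; by rewrite /eps (comparable_ge_min _ cmp) lexx.
have naI : ~ I a by move=> Ia; apply: hr'; apply: hIJ; exists a.
rewrite -ball_normE /= in hba.
have e3 : 0 < e / (3%:R * C) by rewrite divr_gt0 // mulr_gt0.
have [d0 hd0] := conv a naI _ e3.
exists d0 => d /hd0 [h1 h2] /=.
have hphi x : `|x| < e / (3%:R * C) -> `|phi x| < e / 3%:R.
  move=> hx; apply: le_lt_trans (hb x) _.
  rewrite -(ltr_pM2l C0) in hx; apply: lt_le_trans hx _.
  by rewrite le_eqVlt; apply/orP; left; apply/eqP; field; rewrite ?gt_eqF.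
have heps : eps <= e / (3%:R * (Mb + 1)) by rewrite /eps (comparable_ge_min _ cmp) lexx orbT.
have hba' : `|phi a - b| <= eps by rewrite distrC ltW.
split.
  have -> : mulB (phi (u d)) b - b =
     mulB (phi (u d)) (b - phi a) + phi (mulA (u d) a - a) + (phi a - b).
    by rewrite mBr phiB hmul !addrA !subrK.
  apply: (le_lt_trans (ler_normD _ _)); apply: (le_lt_trans (lerD (ler_normD _ _) (lexx _))).
  apply: (arith _ _ _ _ Mb eps e) => //; first exact: ltW.
  - apply: (le_trans (nB _ _)); apply: ler_pM => //; exact: ltW.
  - exact: hphi.
have -> : mulB b (phi (u d)) - b =
   mulB (b - phi a) (phi (u d)) + phi (mulA a (u d) - a) + (phi a - b).
  by rewrite mBl phiB hmul !addrA !subrK.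
apply: (le_lt_trans (ler_normD _ _)); apply: (le_lt_trans (lerD (ler_normD _ _) (lexx _))).
apply: (arith _ _ _ _ Mb eps e) => //; first exact: ltW.
- apply: (le_trans (nB _ _)); rewrite mulrC; apply: ler_pM => //; exact: ltW.
- exact: hphi.
Qed.
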